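(* Let $H$ be a fixed graph on $h$ vertices and let $G=(X\cup Y,E)$ be a simple $H$-minor-free bipartite graph with bipartition $(X,Y)$ such that no vertex of $Y$ is isolated. For $X'\subseteq X$ let $Y(X')=\{y\in Y: X'\subseteq N(y)\}$. If $|Y(X')|\le q$ for every $X'\subseteq X$ with $|X'|<h$, then $|Y|=O((q+h)\cdot|X|^h)$. *)

(* Defs.v *)
(* finite simple graphs as symmetric irreflexive relations on finTypes. *)
From mathcomp Require Import all_boot.
Set Implicit Arguments. Unset Strict Implicit. Unset Printing Implicit Defensive.

Definition induced_connected (V : finType) (e : rel V) (B : {set V}) : Prop :=
  forall x y, x \in B -> y \in B ->
    connect [rel a b | [&& e a b, a \in B & b \in B]] x y.

Definition is_minor (VH : finType) (eH : rel VH) (V : finType) (e : rel V) : Prop :=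
  exists f : VH -> {set V},
    [/\ forall v, f v != set0,
        forall u v, u != v -> [disjoint f u & f v],
        forall v, induced_connected e (f v) &
        forall u v, eH u v -> exists x y, [/\ x \in f u, y \in f v & e x y]].

Definition common_nbrs (V : finType) (e : rel V) (Y X' : {set V}) : {set V} :=
  [set y in Y | X' \subset [set x | e y x]].

(* Main.v *)
Require Import Defs.
From mathcomp Require Import all_boot.

Lemma card_bigcup_le (T I : finType) (S : {set I}) (F : I -> {set T}) :
  #|\bigcup_(i in S) F i| <= \sum_(i in S) #|F i|.
Proof.
apply: (big_ind2 (fun (A : {set T}) n => #|A| <= n)).
- by rewrite cards0.
- move=> A m B n HA HB; apply: (leq_trans (leq_card_setU A B).1).
  exact: leq_add.
- by [].
Qed.

Theorem lemma6p11 :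
  forall (VH : finType) (eH : rel VH),
    symmetric eH -> irreflexive eH ->
  exists C : nat,
  forall (V : finType) (e : rel V) (X Y : {set V}) (q : nat),
    symmetric e -> irreflexive e ->
    X :&: Y = set0 -> X :|: Y = setT ->
    (forall x y, e x y -> (x \in X) = (y \in Y)) ->
    ~ is_minor eH e ->
    (forall y, y \in Y -> exists x, e y x) ->
    (forall X' : {set V}, X' \subset X -> #|X'| < #|VH| ->
        #|common_nbrs e Y X'| <= q) ->
    #|Y| <= C * (q + #|VH|) * #|X| ^ #|VH|.
Proof.
move=> VH eH symH irrH; exists 1 => V e X Y q sym irr XY XUY bip nominor nonisol hq.
have [Y0|[y0 y0Y]] := set_0Vmem Y; first by rewrite Y0 cards0.
have [h1|h2] := leqP #|VH| 1.
  exfalso; apply: nominor; exists (fun _ => [set y0]); split.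
  - by move=> _; apply/set0Pn; exists y0; rewrite inE.
  - move=> u v uv; exfalso; move/negP: uv; apply.
    by apply/eqP; move/card_le1_eqP: h1; apply.
  - move=> _ a b; rewrite !inE => /eqP -> /eqP ->; exact: connect0.
  - move=> u v huv; exfalso.
    have uv : u = v by move/card_le1_eqP: h1; apply.
    by move: huv; rewrite uv irrH.
have nbX : forall y x, y \in Y -> e y x -> x \in X.
  move=> y x yY eyx.
  have := bip _ _ eyx.
  have : y \notin X.
    apply/negP => yX; have : y \in X :&: Y by rewrite inE yX.
    by rewrite XY inE.
  move/negbTE => -> /esym xY.
  have : x \in X :|: Y by rewrite XUY inE.
  by rewrite inE xY orbF.
have sub : Y \subset \bigcup_(x in X) common_nbrs e Y [set x].
  apply/subsetP => y yY; have [x exy] := nonisol y yY.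
  apply/bigcupP; exists x; first exact: nbX exy.
  rewrite /common_nbrs inE yY /=; apply/subsetP => z; rewrite !inE => /eqP ->.
  exact: exy.
have le1 : #|Y| <= \sum_(x in X) q.
  apply: (leq_trans (subset_leq_card sub)).
  apply: (leq_trans (@card_bigcup_le _ _ X (fun x => common_nbrs e Y [set x]))).
  apply: leq_sum => x xX; apply: hq; first by rewrite sub1set.
  by rewrite cards1.
rewrite sum_nat_const in le1.
apply: leq_trans le1 _; rewrite mul1n.
have [X0|Xp] := posnP #|X|; first by rewrite X0.
rewrite mulnC; apply: leq_mul; first exact: leq_addr.
rewrite -[X in X <= _]expn1; apply: leq_pexp2l => //.
exact: ltnW.
Qed.
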